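(* For all $0<\sigma_1<\sigma_2$, $\mathcal{C}(\sigma_1)\subsetneqq\mathcal{C}(\sigma_2)$.
   Context: $H$ is the closure in $L^2([0,L]^2)^2$ of the $\mathbb{R}^2$-valued $[0,L]^2$-periodic trigonometric polynomials $v$ with $\nabla\cdot v=0$ and $\int v\,dx=0$, with norm $|\cdot|$; $A=-\Delta$ is the Stokes operator with spectrally defined powers $A^{\alpha/2}$. Fix $\nu>0$ and $\kappa_0=2\pi/L$. For $\sigma>0$, $\mathcal{C}(\sigma)$ is the set of $u\in C^\infty([0,L]^2)\cap H$ for which there is $c_0=c_0(u)\in\mathbb{R}$ with $\frac{|A^{\alpha/2}u|^2}{\nu^2\kappa_0^{2\alpha}}\le c_0e^{\sigma\alpha^2}$ for all $\alpha\in\mathbb{N}$. *)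

(* Defs.v *)
From Stdlib Require Import Reals Lra Lia ZArith List.
From Coquelicot Require Import Coquelicot.
Open Scope R_scope.

Definition vfield := R -> R -> R * R.

Definition comp (j : bool) (u : vfield) : R -> R -> R :=
  fun x y => if j then snd (u x y) else fst (u x y).

Definition partial (d : bool) (f : R -> R -> R) : R -> R -> R :=
  fun x y => if d then Derive (fun t => f x t) y else Derive (fun t => f t y) x.

Fixpoint iterD (ds : list bool) (f : R -> R -> R) : R -> R -> R :=
  match ds with
  | nil => f
  | d :: ds' => partial d (iterD ds' f)
  end.

Definition smooth2 (f : R -> R -> R) : Prop :=
  forall ds : list bool,
    (forall x y, continuous (fun p : R * R => iterD ds f (fst p) (snd p)) (x, y)) /\
    (forall (d : bool) x y,
        if d then ex_derive (fun t => iterD ds f x t) y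
        else ex_derive (fun t => iterD ds f t y) x).

Definition periodic2 (L : R) (f : R -> R -> R) : Prop :=
  forall x y, f (x + L) y = f x y /\ f x (y + L) = f x y.

Definition int2 (L : R) (g : R -> R -> R) : R :=
  RInt (fun x => RInt (fun y => g x y) 0 L) 0 L.

Definition smooth_in_H (L : R) (u : vfield) : Prop :=
  (forall j, smooth2 (comp j u) /\ periodic2 L (comp j u) /\ int2 L (comp j u) = 0) /\
  (forall x y, partial false (comp false u) x y + partial true (comp true u) x y = 0).

Definition kappa0 (L : R) : R := 2 * PI / L.

Definition phase (L : R) (k1 k2 : Z) (x y : R) : R :=
  kappa0 L * (IZR k1 * x + IZR k2 * y).

(* |(u, e_k)|^2 summed over components, with e_k = exp(i kappa0 k.x)/L the
   orthonormal eigenbasis of A = -Delta on L^2 of the torus *)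
Definition four_sq (L : R) (u : vfield) (k1 k2 : Z) : R :=
  ((int2 L (fun x y => comp false u x y * cos (phase L k1 k2 x y))) ^ 2 +
   (int2 L (fun x y => comp false u x y * sin (phase L k1 k2 x y))) ^ 2 +
   (int2 L (fun x y => comp true u x y * cos (phase L k1 k2 x y))) ^ 2 +
   (int2 L (fun x y => comp true u x y * sin (phase L k1 k2 x y))) ^ 2) / L ^ 2.

Definition eig (L : R) (k1 k2 : Z) : R := kappa0 L ^ 2 * (IZR k1 ^ 2 + IZR k2 ^ 2).

Definition normA_partial (L : R) (u : vfield) (alpha : nat) (N : nat) : R :=
  sum_f_R0 (fun i =>
    sum_f_R0 (fun l =>
      let k1 := (Z.of_nat i - Z.of_nat N)%Z in
      let k2 := (Z.of_nat l - Z.of_nat N)%Z in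
      eig L k1 k2 ^ alpha * four_sq L u k1 k2) (2 * N)) (2 * N).

(* |A^{alpha/2} u|^2 (spectral definition), as an extended real *)
Definition normA2 (L : R) (u : vfield) (alpha : nat) : Rbar :=
  Lim_seq (normA_partial L u alpha).

Definition classC (L nu sigma : R) (u : vfield) : Prop :=
  smooth_in_H L u /\
  exists c0 : R, forall alpha : nat,
    Rbar_le (normA2 L u alpha)
      (Finite (c0 * exp (sigma * INR alpha ^ 2) * (nu ^ 2 * kappa0 L ^ (2 * alpha)))).

(* Main.v *)
Require Import Defs.
From Stdlib Require Import Reals Lra Lia ZArith List.
From Coquelicot Require Import Coquelicot.
Open Scope R_scope.

Ltac toR := match goal with |- ?a = ?b => change (@eq R a b) end.

Definition om (L : R) (j : nat) : R := kappa0 L * 2 ^ j.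
Definition bb (r : R) (j : nat) : R := exp (- (r * INR j ^ 2) / 2).
Definition gt (L r : R) (m j : nat) (y : R) : R :=
  bb r j * om L j ^ m * cos (om L j * y + INR m * (PI / 2)).
Definition Mt (L r : R) (m j : nat) : R := bb r j * om L j ^ m.
Definition Sp (L r : R) (m N : nat) (y : R) : R := sum_f_R0 (fun j => gt L r m j y) N.
Definition Ff (L r : R) (m : nat) (y : R) : R := real (Lim_seq (fun N => Sp L r m N y)).

Lemma kappa0_pos L : 0 < L -> 0 < kappa0 L.
Proof. intros. unfold kappa0. pose proof PI_RGT_0. apply Rdiv_lt_0_compat; lra. Qed.

Lemma om_pos L j : 0 < L -> 0 < om L j.
Proof. intros. unfold om. apply Rmult_lt_0_compat. now apply kappa0_pos.
  apply pow_lt; lra. Qed.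

Lemma Mt_pos L r m j : 0 < L -> 0 < Mt L r m j.
Proof. intros. unfold Mt, bb. apply Rmult_lt_0_compat. apply exp_pos.
  apply pow_lt. now apply om_pos. Qed.

Lemma exp_pow_nat x n : exp x ^ n = exp (INR n * x).
Proof. induction n. simpl. rewrite Rmult_0_l, exp_0. reflexivity.
  rewrite S_INR. simpl pow. rewrite IHn, <- exp_plus. f_equal. ring. Qed.

Lemma Mt_ratio L r m n : 0 < L ->
  Rabs (Mt L r m (S n) / Mt L r m n) = 2 ^ m * exp (- r / 2) * exp (- r) ^ n.
Proof.
  intros HL. rewrite Rabs_pos_eq.
  2: { apply Rlt_le, Rdiv_lt_0_compat; now apply Mt_pos. }
  unfold Mt, bb, om. rewrite exp_pow_nat, S_INR.
  pose proof (kappa0_pos L HL).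
  assert (e : exp (- (r * (INR n + 1) ^ 2) / 2) =
     exp (- (r * INR n ^ 2) / 2) * (exp (- r / 2) * exp (INR n * - r))).
  { rewrite <- !exp_plus. f_equal. field. }
  rewrite e.
  assert (eo : kappa0 L * 2 ^ S n = 2 * (kappa0 L * 2 ^ n)) by (simpl; ring).
  rewrite eo, Rpow_mult_distr.
  assert (0 < (kappa0 L * 2 ^ n) ^ m) by (apply pow_lt, Rmult_lt_0_compat; [lra| apply pow_lt; lra]).
  assert (0 < exp (- (r * INR n ^ 2) / 2)) by apply exp_pos.
  field. split; lra.
Qed.

Lemma ex_series_Mt L r m : 0 < L -> 0 < r -> ex_series (Mt L r m).
Proof.
  intros HL Hr.
  apply ex_series_ext with (fun n => Rabs (Mt L r m n)).
  { intros n. apply Rabs_pos_eq, Rlt_le, Mt_pos; auto. }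
  apply ex_series_DAlembert with 0. lra.
  { intros n. apply Rgt_not_eq, Mt_pos; auto. }
  apply is_lim_seq_ext with (fun n => 2 ^ m * exp (- r / 2) * exp (- r) ^ n).
  { intros n. now rewrite Mt_ratio. }
  replace (Finite 0) with (Rbar_mult (2 ^ m * exp (- r / 2)) 0).
  2:{ simpl. now rewrite Rmult_0_r. }
  apply is_lim_seq_scal_l, is_lim_seq_geom.
  rewrite Rabs_pos_eq by (apply Rlt_le, exp_pos).
  rewrite <- exp_0. apply exp_increasing. lra.
Qed.

Lemma gt_le L r m j y : 0 < L -> Rabs (gt L r m j y) <= Mt L r m j.
Proof.
  intros HL. unfold gt, Mt. rewrite Rabs_mult.
  rewrite (Rabs_pos_eq (bb r j * om L j ^ m)).
  2:{ apply Rlt_le, (Mt_pos L r m j HL). }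
  rewrite <- (Rmult_1_r (bb r j * om L j ^ m)) at 2.
  apply Rmult_le_compat_l. apply Rlt_le, (Mt_pos L r m j HL).
  apply Rabs_le, COS_bound.
Qed.

Lemma ex_series_abs_gt L r m y : 0 < L -> 0 < r ->
  ex_series (fun j => Rabs (gt L r m j y)).
Proof.
  intros HL Hr. apply (@ex_series_le R_AbsRing R_CompleteNormedModule) with (Mt L r m).
  intros n. unfold norm; simpl. unfold abs; simpl. rewrite Rabs_Rabsolu. now apply gt_le.
  now apply ex_series_Mt.
Qed.

Lemma Ff_Series L r m y : Ff L r m y = Series (fun j => gt L r m j y).
Proof.
  unfold Ff, Series. f_equal. apply Lim_seq_ext. intros n.
  unfold Sp. now rewrite sum_n_Reals.
Qed.

Lemma tail_bound L r m N y : 0 < L -> 0 < r ->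
  Rabs (Ff L r m y - Sp L r m N y) <= Series (Mt L r m) - sum_f_R0 (Mt L r m) N.
Proof.
  intros HL Hr.
  pose proof (ex_series_Rabs _ (ex_series_abs_gt L r m y HL Hr)) as Eg.
  pose proof (ex_series_Mt L r m HL Hr) as EM.
  rewrite Ff_Series.
  rewrite (Series_incr_n _ (S N)) by (lia || auto).
  rewrite (Series_incr_n (Mt L r m) (S N)) by (lia || auto).
  simpl Init.Nat.pred. unfold Sp.
  replace (sum_f_R0 (fun j : nat => gt L r m j y) N +
     Series (fun k : nat => gt L r m (S N + k) y) - sum_f_R0 (fun j : nat => gt L r m j y) N)
   with (Series (fun k : nat => gt L r m (S N + k) y)) by ring.
  replace (sum_f_R0 (Mt L r m) N + Series (fun k : nat => Mt L r m (S N + k)) -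
      sum_f_R0 (Mt L r m) N) with (Series (fun k : nat => Mt L r m (S N + k))) by ring.
  eapply Rle_trans. apply Series_Rabs.
  apply (ex_series_incr_n (fun k => Rabs (gt L r m k y)) (S N)).
  now apply ex_series_abs_gt.
  apply Series_le. intros n. split. apply Rabs_pos. now apply gt_le.
  now apply (ex_series_incr_n (Mt L r m) (S N)).
Qed.

Lemma tail_lim L r m : 0 < L -> 0 < r ->
  is_lim_seq (fun N => Series (Mt L r m) - sum_f_R0 (Mt L r m) N) 0.
Proof.
  intros HL Hr.
  replace 0 with (Series (Mt L r m) - Series (Mt L r m)) by ring.
  apply is_lim_seq_minus'. apply is_lim_seq_const.
  pose proof (Series_correct _ (ex_series_Mt L r m HL Hr)) as H.
  eapply is_lim_seq_ext. 2: exact H. intros n. simpl. now rewrite sum_n_Reals.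
Qed.

Lemma CVU_Sp L r m : 0 < L -> 0 < r -> CVU_dom (Sp L r m) (fun _ => True).
Proof.
  intros HL Hr eps.
  pose proof (tail_lim L r m HL Hr) as H.
  apply is_lim_seq_Reals in H.
  destruct (H eps (cond_pos eps)) as [N0 HN0].
  exists N0. intros n Hn x _.
  fold (Ff L r m x). rewrite Rabs_minus_sym.
  eapply Rle_lt_trans. apply tail_bound; auto.
  specialize (HN0 n Hn). unfold R_dist in HN0. rewrite Rminus_0_r in HN0.
  eapply Rle_lt_trans. apply Rle_abs. exact HN0.
Qed.

Lemma is_derive_gt L r m j y : is_derive (gt L r m j) y (gt L r (S m) j y).
Proof.
  unfold gt. auto_derive. trivial.
  rewrite S_INR.
  replace (om L j * y + (INR m + 1) * (PI / 2)) with
     ((om L j * y + INR m * (PI / 2)) + PI/2) by ring.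
  rewrite cos_plus, cos_PI2, sin_PI2. simpl pow. ring.
Qed.

Lemma is_derive_Sp L r m N y : is_derive (Sp L r m N) y (Sp L r (S m) N y).
Proof.
  induction N; unfold Sp; simpl.
  - apply is_derive_gt.
  - apply (is_derive_plus (fun y => sum_f_R0 (fun j : nat => gt L r m j y) N)
                          (gt L r m (S N))).
    apply IHN. apply is_derive_gt.
Qed.

Lemma continuous_gt L r m j y : continuous (gt L r m j) y.
Proof.
  unfold gt. apply continuity_pt_filterlim.
  apply continuity_pt_mult. apply continuity_pt_const. intros a b; reflexivity.
  apply (continuity_pt_comp (fun y => om L j * y + INR m * (PI / 2)) cos).
  apply continuity_pt_plus. apply continuity_pt_mult. apply continuity_pt_const.
  intros a b; reflexivity. apply continuity_pt_id. apply continuity_pt_const.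
  intros a b; reflexivity. apply continuity_cos.
Qed.

Lemma continuous_Sp L r m N y : continuous (Sp L r m N) y.
Proof.
  induction N; unfold Sp; simpl.
  - apply continuous_gt.
  - apply (continuous_plus (fun y => sum_f_R0 (fun j : nat => gt L r m j y) N)
                          (gt L r m (S N))).
    apply IHN. apply continuous_gt.
Qed.

Lemma Derive_Sp L r m N y : Derive (Sp L r m N) y = Sp L r (S m) N y.
Proof. apply is_derive_unique, is_derive_Sp. Qed.

Lemma is_derive_Ff L r m y : 0 < L -> 0 < r -> is_derive (Ff L r m) y (Ff L r (S m) y).
Proof.
  intros HL Hr.
  pose proof (CVU_Derive (Sp L r m) (fun _ => True) open_true) as H.
  assert (Hc : is_connected (fun _ : R => True)) by (intros ? ? ? ? ? ?; trivial).
  specialize (H Hc (CVU_Sp L r m HL Hr)).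
  assert (H1 : forall n x, True -> ex_derive (Sp L r m n) x).
  { intros n x _. eexists. apply is_derive_Sp. }
  specialize (H H1).
  assert (H2 : forall n x, True -> continuity_pt (Derive (Sp L r m n)) x).
  { intros n x _. apply continuity_pt_filterlim.
    apply (continuous_ext (Sp L r (S m) n)). intros t. now rewrite Derive_Sp.
    apply continuous_Sp. }
  specialize (H H2).
  assert (H3 : CVU_dom (fun n x => Derive (Sp L r m n) x) (fun _ => True)).
  { intros eps. destruct (CVU_Sp L r (S m) HL Hr eps) as [N0 HN0]. exists N0.
    intros n Hn x Hx. rewrite Derive_Sp.
    rewrite (Lim_seq_ext _ (fun n0 => Sp L r (S m) n0 x)).
    now apply HN0. intros k. now rewrite Derive_Sp. }
  specialize (H H3 y I).
  unfold Ff.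
  rewrite (Lim_seq_ext _ (fun n0 => Sp L r (S m) n0 y)) in H.
  exact H. intros k. now rewrite Derive_Sp.
Qed.

Lemma continuous_Ff L r m y : 0 < L -> 0 < r -> continuous (Ff L r m) y.
Proof.
  intros HL Hr. apply continuity_pt_filterlim.
  apply (CVU_cont_open (Sp L r m) (fun _ => True) open_true (CVU_Sp L r m HL Hr)).
  intros n x _. apply continuity_pt_filterlim, continuous_Sp. trivial.
Qed.

Definition uu (L r : R) : vfield := fun x y => (Ff L r 0 y, 0).

Definition Pshape (L r : R) (phi : R -> R -> R) : Prop :=
  (exists m, forall x y, phi x y = Ff L r m y) \/ (forall x y, phi x y = 0).

Lemma Pshape_partial L r d phi : 0 < L -> 0 < r ->
  Pshape L r phi -> Pshape L r (partial d phi).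
Proof.
  intros HL Hr [[m Hm] | H0]; unfold partial; destruct d.
  - left. exists (S m). intros x y.
    rewrite (Derive_ext _ (Ff L r m)) by auto.
    now apply is_derive_unique, is_derive_Ff.
  - right. intros x y. rewrite (Derive_ext _ (fun _ => Ff L r m y)) by auto.
    apply Derive_const.
  - right. intros x y. rewrite (Derive_ext _ (fun _ => 0)) by auto. apply Derive_const.
  - right. intros x y. rewrite (Derive_ext _ (fun _ => 0)) by auto. apply Derive_const.
Qed.

Lemma Pshape_iterD L r ds phi : 0 < L -> 0 < r ->
  Pshape L r phi -> Pshape L r (iterD ds phi).
Proof.
  intros HL Hr H. induction ds; simpl. exact H. now apply Pshape_partial.
Qed.

Lemma Pshape_smooth L r phi : 0 < L -> 0 < r ->
  Pshape L r phi -> smooth2 phi.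
Proof.
  intros HL Hr H ds. pose proof (Pshape_iterD L r ds phi HL Hr H) as [[m Hm] | H0].
  - split.
    + intros x y. apply (continuous_ext (fun p : R * R => Ff L r m (snd p))).
      intros p. now rewrite Hm.
      apply (continuous_comp snd (Ff L r m)). apply continuous_snd.
      now apply continuous_Ff.
    + intros d x y. destruct d.
      * apply (ex_derive_ext (Ff L r m)). intros t; now rewrite Hm.
        eexists. now apply is_derive_Ff.
      * apply (ex_derive_ext (fun _ => Ff L r m y)). intros t; now rewrite Hm.
        apply ex_derive_const.
  - split.
    + intros x y. apply (continuous_ext (fun p : R * R => 0)).
      intros p. now rewrite H0. apply continuous_const.
    + intros d x y. destruct d.
      * apply (ex_derive_ext (fun _ => 0)). intros t; now rewrite H0. apply ex_derive_const.
      * apply (ex_derive_ext (fun _ => 0)). intros t; now rewrite H0. apply ex_derive_const.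
Qed.

Lemma RInt_minusR (f g : R -> R) a b : ex_RInt f a b -> ex_RInt g a b ->
  RInt (fun x => f x - g x) a b = RInt f a b - RInt g a b.
Proof. intros. exact (RInt_minus f g a b H H0). Qed.

Lemma RInt_plusR (f g : R -> R) a b : ex_RInt f a b -> ex_RInt g a b ->
  RInt (fun x => f x + g x) a b = RInt f a b + RInt g a b.
Proof. intros. exact (RInt_plus f g a b H H0). Qed.

Lemma RInt_scalR (f : R -> R) a b c : ex_RInt f a b ->
  RInt (fun x => c * f x) a b = c * RInt f a b.
Proof. intros. exact (RInt_scal f a b c H). Qed.

Lemma RInt_constR a b c : RInt (fun _ => c) a b = (b - a) * c.
Proof. exact (RInt_const a b c). Qed.

Lemma continuous_cos_lin a b y : continuous (fun y => cos (a * y + b)) y.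
Proof.
  apply continuity_pt_filterlim.
  apply (continuity_pt_comp (fun y => a * y + b) cos).
  apply continuity_pt_plus. apply continuity_pt_mult. apply continuity_pt_const.
  intros u v; reflexivity. apply continuity_pt_id. apply continuity_pt_const.
  intros u v; reflexivity. apply continuity_cos.
Qed.

Lemma continuous_sin_lin a b y : continuous (fun y => sin (a * y + b)) y.
Proof.
  apply continuity_pt_filterlim.
  apply (continuity_pt_comp (fun y => a * y + b) sin).
  apply continuity_pt_plus. apply continuity_pt_mult. apply continuity_pt_const.
  intros u v; reflexivity. apply continuity_pt_id. apply continuity_pt_const.
  intros u v; reflexivity. apply continuity_sin.
Qed.

Lemma continuous_cos_l a y : continuous (fun y => cos (a * y)) y.
Proof. apply (continuous_ext (fun y => cos (a * y + 0))). intros; now rewrite Rplus_0_r.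
  apply continuous_cos_lin. Qed.
Lemma continuous_sin_l a y : continuous (fun y => sin (a * y)) y.
Proof. apply (continuous_ext (fun y => sin (a * y + 0))). intros; now rewrite Rplus_0_r.
  apply continuous_sin_lin. Qed.

Lemma continuous_plusR (f g : R -> R) y : continuous f y -> continuous g y ->
  continuous (fun y => f y + g y) y.
Proof. intros. exact (continuous_plus f g y H H0). Qed.
Lemma continuous_minusR (f g : R -> R) y : continuous f y -> continuous g y ->
  continuous (fun y => f y - g y) y.
Proof. intros. exact (continuous_minus f g y H H0). Qed.

Lemma continuous_multR (f g : R -> R) y : continuous f y -> continuous g y ->
  continuous (fun y => f y * g y) y.
Proof. intros. exact (continuous_mult f g y H H0). Qed.

Ltac cont := match goal with
  | |- continuous (fun y => ?f - ?g) _ => apply continuous_minusR; cont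
  | |- continuous (fun y => ?f + ?g) _ => apply continuous_plusR; cont
  | |- continuous (fun y => ?f * ?g) _ => apply continuous_multR; cont
  | |- continuous (fun y => cos _) _ => apply continuous_cos_l
  | |- continuous (fun y => sin _) _ => apply continuous_sin_l
  | _ => idtac end.

Lemma ex_RInt_cont (f : R -> R) a b : (forall y, continuous f y) -> ex_RInt f a b.
Proof. intros H. apply (@ex_RInt_continuous R_CompleteNormedModule). intros; apply H. Qed.


Lemma kL L : 0 < L -> kappa0 L * L = 2 * PI.
Proof. intros. unfold kappa0. field. lra. Qed.

Lemma sin_2PI_int p : sin (2 * PI * IZR p) = 0.
Proof. apply sin_eq_0_1. exists (2 * p)%Z. rewrite mult_IZR. ring. Qed.

Lemma cos_2PI_int p : cos (2 * PI * IZR p) = 1.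
Proof.
  replace (2 * PI * IZR p) with (2 * (IZR p * PI)) by ring.
  rewrite cos_2a_sin. rewrite sin_eq_0_1. ring. now exists p.
Qed.

Lemma int_cos L p : 0 < L ->
  RInt (fun y => cos (kappa0 L * IZR p * y)) 0 L = if Z.eq_dec p 0 then L else 0.
Proof.
  intros HL. pose proof (kappa0_pos L HL) as Hk. destruct (Z.eq_dec p 0).
  - subst. rewrite (RInt_ext _ (fun _ => 1)). rewrite RInt_constR. simpl. ring.
    intros. rewrite Rmult_0_r, Rmult_0_l. apply cos_0.
  - assert (Hp : IZR p <> 0) by (apply not_0_IZR; auto).
    apply is_RInt_unique.
    replace 0 with (minus (sin (kappa0 L * IZR p * L) / (kappa0 L * IZR p))
                          (sin (kappa0 L * IZR p * 0) / (kappa0 L * IZR p))) at 2.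
    apply (is_RInt_derive (fun y => sin (kappa0 L * IZR p * y) / (kappa0 L * IZR p))).
    + intros x _. auto_derive. trivial. field. split; lra.
    + intros x _. apply continuous_cos_l.
    + replace (kappa0 L * IZR p * L) with (2 * PI * IZR p).
      2:{ rewrite <- (kL L HL). ring. }
      rewrite sin_2PI_int, Rmult_0_r, sin_0. unfold minus, plus, opp; simpl. field. lra.
Qed.

Lemma int_sin L p : 0 < L ->
  RInt (fun y => sin (kappa0 L * IZR p * y)) 0 L = 0.
Proof.
  intros HL. pose proof (kappa0_pos L HL) as Hk. destruct (Z.eq_dec p 0).
  - subst. rewrite (RInt_ext _ (fun _ => 0)). rewrite RInt_constR. apply Rmult_0_r.
    intros. rewrite Rmult_0_r, Rmult_0_l. apply sin_0.
  - assert (Hp : IZR p <> 0) by (apply not_0_IZR; auto).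
    apply is_RInt_unique.
    replace 0 with (minus (- cos (kappa0 L * IZR p * L) / (kappa0 L * IZR p))
                          (- cos (kappa0 L * IZR p * 0) / (kappa0 L * IZR p))) at 2.
    apply (is_RInt_derive (fun y => - cos (kappa0 L * IZR p * y) / (kappa0 L * IZR p))).
    + intros x _. auto_derive. trivial. field. split; lra.
    + intros x _. apply continuous_sin_l.
    + replace (kappa0 L * IZR p * L) with (2 * PI * IZR p).
      2:{ rewrite <- (kL L HL). ring. }
      rewrite cos_2PI_int, Rmult_0_r, cos_0. unfold minus, plus, opp; simpl. field. lra.
Qed.

Definition qj (j : nat) : Z := Z.of_nat (2 ^ j).

Lemma om_qj L j : om L j = kappa0 L * IZR (qj j).
Proof. unfold om, qj. rewrite <- INR_IZR_INZ, pow_INR. reflexivity. Qed.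

Lemma gt0_eq L r j y : gt L r 0 j y = bb r j * cos (kappa0 L * IZR (qj j) * y).
Proof. unfold gt. rewrite om_qj. simpl. f_equal. ring. f_equal. ring. Qed.

Lemma coef_cos_term L r j k : 0 < L ->
  RInt (fun y => gt L r 0 j y * cos (kappa0 L * IZR k * y)) 0 L =
  bb r j * (L / 2) * ((if Z.eq_dec (qj j) k then 1 else 0) +
                      (if Z.eq_dec (qj j) (- k) then 1 else 0)).
Proof.
  intros HL.
  rewrite (RInt_ext _ (fun y => (bb r j / 2) *
     (cos (kappa0 L * IZR (qj j - k) * y) + cos (kappa0 L * IZR (qj j + k) * y)))).
  2:{ intros y _. rewrite gt0_eq, minus_IZR, plus_IZR.
      replace (kappa0 L * (IZR (qj j) - IZR k) * y) with
        (kappa0 L * IZR (qj j) * y - kappa0 L * IZR k * y) by ring.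
      replace (kappa0 L * (IZR (qj j) + IZR k) * y) with
        (kappa0 L * IZR (qj j) * y + kappa0 L * IZR k * y) by ring.
      rewrite cos_minus, cos_plus. toR; field. }
  rewrite RInt_scalR, RInt_plusR, !int_cos by (auto; apply ex_RInt_cont; intros; cont).
  destruct (Z.eq_dec (qj j - k) 0), (Z.eq_dec (qj j) k), (Z.eq_dec (qj j + k) 0), (Z.eq_dec (qj j) (-k));
    try lia; toR; field.
Qed.

Lemma coef_sin_term L r j k : 0 < L ->
  RInt (fun y => gt L r 0 j y * sin (kappa0 L * IZR k * y)) 0 L = 0.
Proof.
  intros HL.
  rewrite (RInt_ext _ (fun y => (bb r j / 2) *
     (sin (kappa0 L * IZR (qj j + k) * y) - sin (kappa0 L * IZR (qj j - k) * y)))).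
  2:{ intros y _. rewrite gt0_eq, minus_IZR, plus_IZR.
      replace (kappa0 L * (IZR (qj j) - IZR k) * y) with
        (kappa0 L * IZR (qj j) * y - kappa0 L * IZR k * y) by ring.
      replace (kappa0 L * (IZR (qj j) + IZR k) * y) with
        (kappa0 L * IZR (qj j) * y + kappa0 L * IZR k * y) by ring.
      rewrite sin_minus, sin_plus. toR; field. }
  rewrite RInt_scalR. rewrite RInt_minusR. rewrite !int_sin by auto.
  toR; ring. all: apply ex_RInt_cont; intros; cont. 
Qed.

Lemma lt_pow2 j : (j < 2 ^ j)%nat.
Proof. induction j. simpl; lia. rewrite Nat.pow_succ_r'. lia. Qed.

Lemma qj_pos j : (0 < qj j)%Z.
Proof. unfold qj. pose proof (lt_pow2 j). lia. Qed.

Definition Ind (j : nat) (k : Z) : R :=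
  (if Z.eq_dec (qj j) k then 1 else 0) + (if Z.eq_dec (qj j) (- k) then 1 else 0).

Definition Vk (r : R) (k : Z) : R :=
  sum_f_R0 (fun j => bb r j * Ind j k) (Z.to_nat (Z.abs k)).

Lemma Ind_zero j k : (Z.to_nat (Z.abs k) < j)%nat -> Ind j k = 0.
Proof.
  intros H. unfold Ind, qj. pose proof (lt_pow2 j).
  destruct (Z.eq_dec _ k), (Z.eq_dec _ (-k)); try lia; ring.
Qed.

Lemma sum_ext_zero (f : nat -> R) M N : (M <= N)%nat ->
  (forall j, (M < j)%nat -> f j = 0) -> sum_f_R0 f N = sum_f_R0 f M.
Proof.
  intros H Hz. induction H. reflexivity.
  simpl. rewrite IHle, Hz by lia. ring.
Qed.

Lemma RInt_sum L (h : nat -> R -> R) N : (forall j y, continuous (h j) y) ->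
  RInt (fun y => sum_f_R0 (fun j => h j y) N) 0 L = sum_f_R0 (fun j => RInt (h j) 0 L) N.
Proof.
  intros Hc. induction N; simpl. reflexivity.
  rewrite RInt_plusR. now rewrite IHN.
  apply ex_RInt_cont. intros y. clear IHN. induction N; simpl. apply Hc.
  apply continuous_plusR; auto.
  apply ex_RInt_cont. apply Hc.
Qed.

Lemma continuous_Sp_all L r m N y : continuous (Sp L r m N) y.
Proof. apply continuous_Sp. Qed.

Definition tl (L r : R) (N : nat) : R := Series (Mt L r 0) - sum_f_R0 (Mt L r 0) N.

Lemma approx L r (c : R -> R) N : 0 < L -> 0 < r ->
  (forall y, continuous c y) -> (forall y, Rabs (c y) <= 1) ->
  Rabs (RInt (fun y => Ff L r 0 y * c y) 0 L - RInt (fun y => Sp L r 0 N y * c y) 0 L)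
  <= L * tl L r N.
Proof.
  intros HL Hr Hc Hb.
  rewrite <- RInt_minusR.
  2,3: apply ex_RInt_cont; intros y; apply continuous_multR;
       first [apply continuous_Ff; auto | apply continuous_Sp | auto].
  replace (L * tl L r N) with ((L - 0) * tl L r N) by ring.
  apply abs_RInt_le_const. lra.
  apply ex_RInt_cont; intros y; apply continuous_minusR; apply continuous_multR;
       first [apply continuous_Ff; auto | apply continuous_Sp | auto].
  intros t _. replace (Ff L r 0 t * c t - Sp L r 0 N t * c t) with
    ((Ff L r 0 t - Sp L r 0 N t) * c t) by ring.
  rewrite Rabs_mult. rewrite <- (Rmult_1_r (tl L r N)).
  apply Rmult_le_compat; try apply Rabs_pos; auto.
  now apply tail_bound.
Qed.

Lemma eq_by_tail L r a b N1 : 0 < L -> 0 < r ->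
  (forall N, (N1 <= N)%nat -> Rabs (a - b) <= L * tl L r N) -> a = b.
Proof.
  intros HL Hr H.
  destruct (Req_dec (a - b) 0) as [E|E]. lra. exfalso.
  assert (Hd : 0 < Rabs (a - b)) by (apply Rabs_pos_lt; auto).
  pose proof (tail_lim L r 0 HL Hr) as T. apply is_lim_seq_Reals in T.
  destruct (T (Rabs (a - b) / (2 * L))) as [N0 HN0].
  { apply Rdiv_lt_0_compat; lra. }
  specialize (HN0 (max N0 N1) (Nat.le_max_l _ _)).
  specialize (H (max N0 N1) (Nat.le_max_r _ _)).
  unfold R_dist in HN0. rewrite Rminus_0_r in HN0. fold (tl L r (max N0 N1)) in HN0.
  pose proof (Rle_abs (tl L r (max N0 N1))).
  assert (L * tl L r (max N0 N1) < Rabs (a - b) / 2).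
  { replace (Rabs (a - b) / 2) with (L * (Rabs (a - b) / (2 * L))) by (field; lra).
    apply Rmult_lt_compat_l; lra. }
  lra.
Qed.

Definition Aco (L r : R) (k : Z) : R :=
  RInt (fun y => Ff L r 0 y * cos (kappa0 L * IZR k * y)) 0 L.
Definition Bco (L r : R) (k : Z) : R :=
  RInt (fun y => Ff L r 0 y * sin (kappa0 L * IZR k * y)) 0 L.

Lemma Aco_eq L r k : 0 < L -> 0 < r -> Aco L r k = L / 2 * Vk r k.
Proof.
  intros HL Hr. apply (eq_by_tail L r _ _ (Z.to_nat (Z.abs k)) HL Hr).
  intros N HN.
  assert (E : RInt (fun y => Sp L r 0 N y * cos (kappa0 L * IZR k * y)) 0 L = L / 2 * Vk r k).
  { rewrite (RInt_ext _ (fun y => sum_f_R0 (fun j => gt L r 0 j y * cos (kappa0 L * IZR k * y)) N)).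
    2:{ intros y _. unfold Sp. rewrite Rmult_comm, scal_sum. apply sum_eq. intros. toR; ring. }
    rewrite RInt_sum.
    2:{ intros j y. apply continuous_multR. apply continuous_gt. apply continuous_cos_l. }
    rewrite (sum_eq _ (fun j => (bb r j * Ind j k) * (L / 2))).
    2:{ intros j _. rewrite coef_cos_term by auto. unfold Ind. ring. }
    rewrite <- scal_sum. f_equal. unfold Vk.
    apply sum_ext_zero. auto. intros j Hj. rewrite Ind_zero by auto. ring. }
  rewrite <- E. unfold Aco. apply approx; auto.
  intros; apply continuous_cos_l. intros; apply Rabs_le, COS_bound.
Qed.

Lemma Bco_eq L r k : 0 < L -> 0 < r -> Bco L r k = 0.
Proof.
  intros HL Hr. apply (eq_by_tail L r _ _ 0 HL Hr).
  intros N HN.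
  assert (E : RInt (fun y => Sp L r 0 N y * sin (kappa0 L * IZR k * y)) 0 L = 0).
  { rewrite (RInt_ext _ (fun y => sum_f_R0 (fun j => gt L r 0 j y * sin (kappa0 L * IZR k * y)) N)).
    2:{ intros y _. unfold Sp. rewrite Rmult_comm, scal_sum. apply sum_eq. intros. toR; ring. }
    rewrite RInt_sum.
    2:{ intros j y. apply continuous_multR. apply continuous_gt. apply continuous_sin_l. }
    rewrite (sum_eq _ (fun j => 0)).
    2:{ intros j _. now rewrite coef_sin_term by auto. }
    clear. induction N; simpl; toR; lra. }
  rewrite <- E. unfold Bco. apply approx; auto.
  intros; apply continuous_sin_l. intros; apply Rabs_le, SIN_bound.
Qed.

Definition ck (L : R) (k1 : Z) : R := if Z.eq_dec k1 0 then L else 0.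

Lemma ex_RInt_Ffc L r a : 0 < L -> 0 < r ->
  ex_RInt (fun y => Ff L r 0 y * cos (a * y)) 0 L.
Proof. intros. apply ex_RInt_cont. intros. apply continuous_multR.
  now apply continuous_Ff. apply continuous_cos_l. Qed.
Lemma ex_RInt_Ffs L r a : 0 < L -> 0 < r ->
  ex_RInt (fun y => Ff L r 0 y * sin (a * y)) 0 L.
Proof. intros. apply ex_RInt_cont. intros. apply continuous_multR.
  now apply continuous_Ff. apply continuous_sin_l. Qed.


Lemma RInt_comb2 (f g : R -> R) a b u v : ex_RInt f u v -> ex_RInt g u v ->
  RInt (fun y => a * f y - b * g y) u v = a * RInt f u v - b * RInt g u v.
Proof.
  intros Hf Hg. rewrite RInt_minusR. rewrite !RInt_scalR; auto.
  apply (ex_RInt_scal f u v a Hf). apply (ex_RInt_scal g u v b Hg).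
Qed.

Lemma RInt_comb2p (f g : R -> R) a b u v : ex_RInt f u v -> ex_RInt g u v ->
  RInt (fun y => a * f y + b * g y) u v = a * RInt f u v + b * RInt g u v.
Proof.
  intros Hf Hg. rewrite RInt_plusR. rewrite !RInt_scalR; auto.
  apply (ex_RInt_scal f u v a Hf). apply (ex_RInt_scal g u v b Hg).
Qed.

Lemma int2_cos L r k1 k2 : 0 < L -> 0 < r ->
  int2 L (fun x y => Defs.comp false (uu L r) x y * cos (phase L k1 k2 x y)) = Aco L r k2 * ck L k1.
Proof.
  intros HL Hr. unfold int2.
  rewrite (RInt_ext _ (fun x => Aco L r k2 * cos (kappa0 L * IZR k1 * x)
                              - Bco L r k2 * sin (kappa0 L * IZR k1 * x))).
  2:{ intros x _. unfold Aco, Bco.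
      rewrite (RInt_ext _ (fun y => cos (kappa0 L * IZR k1 * x) * (Ff L r 0 y * cos (kappa0 L * IZR k2 * y))
                   - sin (kappa0 L * IZR k1 * x) * (Ff L r 0 y * sin (kappa0 L * IZR k2 * y)))).
      rewrite RInt_comb2. toR; ring.
      apply ex_RInt_Ffc; auto. apply ex_RInt_Ffs; auto.
      intros y _. unfold Defs.comp, uu, phase. simpl.
      replace (kappa0 L * (IZR k1 * x + IZR k2 * y)) with
        (kappa0 L * IZR k1 * x + kappa0 L * IZR k2 * y) by ring.
      rewrite cos_plus. toR; ring. }
  rewrite RInt_comb2.
  rewrite int_cos, int_sin by auto. unfold ck. destruct (Z.eq_dec k1 0); toR; ring.
  apply ex_RInt_cont; intros; apply continuous_cos_l.
  apply ex_RInt_cont; intros; apply continuous_sin_l.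
Qed.

Lemma int2_sin L r k1 k2 : 0 < L -> 0 < r ->
  int2 L (fun x y => Defs.comp false (uu L r) x y * sin (phase L k1 k2 x y)) = Bco L r k2 * ck L k1.
Proof.
  intros HL Hr. unfold int2.
  rewrite (RInt_ext _ (fun x => Aco L r k2 * sin (kappa0 L * IZR k1 * x)
                              + Bco L r k2 * cos (kappa0 L * IZR k1 * x))).
  2:{ intros x _. unfold Aco, Bco.
      rewrite (RInt_ext _ (fun y => sin (kappa0 L * IZR k1 * x) * (Ff L r 0 y * cos (kappa0 L * IZR k2 * y))
                   + cos (kappa0 L * IZR k1 * x) * (Ff L r 0 y * sin (kappa0 L * IZR k2 * y)))).
      rewrite RInt_comb2p. toR; ring.
      apply ex_RInt_Ffc; auto. apply ex_RInt_Ffs; auto.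
      intros y _. unfold Defs.comp, uu, phase. simpl.
      replace (kappa0 L * (IZR k1 * x + IZR k2 * y)) with
        (kappa0 L * IZR k1 * x + kappa0 L * IZR k2 * y) by ring.
      rewrite sin_plus. toR; ring. }
  rewrite RInt_comb2p.
  rewrite int_cos, int_sin by auto. unfold ck. destruct (Z.eq_dec k1 0); toR; ring.
  apply ex_RInt_cont; intros; apply continuous_sin_l.
  apply ex_RInt_cont; intros; apply continuous_cos_l.
Qed.

Lemma int2_zero L r (h : R -> R -> R) :
  int2 L (fun x y => Defs.comp true (uu L r) x y * h x y) = 0.
Proof.
  unfold int2. rewrite (RInt_ext _ (fun _ => 0)). rewrite RInt_constR. toR; ring.
  intros x _. rewrite (RInt_ext _ (fun _ => 0)). rewrite RInt_constR. toR; ring.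
  intros y _. unfold Defs.comp, uu. simpl. toR; ring.
Qed.

Lemma four_sq_uu L r k1 k2 : 0 < L -> 0 < r ->
  four_sq L (uu L r) k1 k2 = (L / 2 * Vk r k2) ^ 2 * (ck L k1 / L) ^ 2.
Proof.
  intros HL Hr. unfold four_sq.
  rewrite int2_cos, int2_sin, !int2_zero by auto.
  rewrite Bco_eq, Aco_eq by auto. field. lra.
Qed.

Lemma Ff_periodic L r y : 0 < L -> Ff L r 0 (y + L) = Ff L r 0 y.
Proof.
  intros HL. unfold Ff. f_equal. apply Lim_seq_ext. intros N. unfold Sp.
  apply sum_eq. intros j _. rewrite !gt0_eq. f_equal.
  replace (kappa0 L * IZR (qj j) * (y + L)) with
    (kappa0 L * IZR (qj j) * y + 2 * INR (2 ^ j) * PI).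
  apply cos_period.
  unfold qj. rewrite <- INR_IZR_INZ. rewrite Rmult_plus_distr_l.
  f_equal. pose proof (kL L HL). transitivity (kappa0 L * L * INR (2 ^ j)). rewrite H; ring. ring.
Qed.

Lemma Vk0 r : Vk r 0 = 0.
Proof.
  unfold Vk, Ind. simpl. pose proof (qj_pos 0).
  destruct (Z.eq_dec (qj 0) 0), (Z.eq_dec (qj 0) (-0)); try lia. ring.
Qed.

Lemma uu_smooth_in_H L r : 0 < L -> 0 < r -> smooth_in_H L (uu L r).
Proof.
  intros HL Hr. split.
  - intros j. destruct j.
    + split; [| split].
      * apply (Pshape_smooth L r); auto. right. intros x y. reflexivity.
      * intros x y. split; reflexivity.
      * unfold int2. rewrite (RInt_ext _ (fun _ => 0)). rewrite RInt_constR. toR; ring.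
        intros x _. rewrite (RInt_ext _ (fun _ => 0)). rewrite RInt_constR. toR; ring.
        intros y _. reflexivity.
    + split; [| split].
      * apply (Pshape_smooth L r); auto. left. exists 0%nat. intros x y. reflexivity.
      * intros x y. unfold Defs.comp, uu; simpl. split. reflexivity. now apply Ff_periodic.
      * pose proof (int2_cos L r 0 0 HL Hr) as H.
        rewrite Aco_eq, Vk0 in H by auto. unfold int2 in *.
        rewrite <- (RInt_ext (fun x : R => RInt (fun y : R =>
            Defs.comp false (uu L r) x y * cos (phase L 0 0 x y)) 0 L)).
        rewrite H. toR; ring.
        intros x _. apply RInt_ext. intros y _. unfold phase. simpl.
        rewrite !Rmult_0_l, Rplus_0_r, Rmult_0_r, cos_0. toR; ring.
  - intros x y. unfold partial, Defs.comp, uu; simpl. rewrite !Derive_const. ring.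
Qed.

Lemma sum_zero_le (f : nat -> R) n : (forall i, (i <= n)%nat -> f i = 0) -> sum_f_R0 f n = 0.
Proof. intros H. induction n; simpl. apply H; lia. rewrite IHn. rewrite H. ring. lia. intros; apply H; lia. Qed.

Lemma sum_single (f : nat -> R) i0 n : (i0 <= n)%nat ->
  (forall i, i <> i0 -> f i = 0) -> sum_f_R0 f n = f i0.
Proof.
  intros H Hz. induction n.
  - assert (i0 = 0%nat) by lia. subst. reflexivity.
  - destruct (Nat.eq_dec i0 (S n)).
    + subst. simpl. rewrite (sum_zero_le f n). ring. intros; apply Hz; lia.
    + simpl. rewrite IHn by lia. rewrite (Hz (S n)) by lia. ring.
Qed.

Lemma sum_all_zero (f : nat -> R) n : (forall i, f i = 0) -> sum_f_R0 f n = 0.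
Proof. intros H. induction n; simpl; rewrite H; [ring | rewrite IHn; ring]. Qed.

Lemma sum_ge_single (f : nat -> R) i0 n : (i0 <= n)%nat ->
  (forall i, 0 <= f i) -> f i0 <= sum_f_R0 f n.
Proof.
  intros H Hp. induction n.
  - assert (i0 = 0%nat) by lia. subst. simpl. lra.
  - destruct (Nat.eq_dec i0 (S n)).
    + subst. simpl. pose proof (cond_pos_sum f n Hp). lra.
    + simpl. pose proof (Hp (S n)). specialize (IHn ltac:(lia)). lra.
Qed.

Lemma qj_inj j j' : qj j = qj j' -> j = j'.
Proof. unfold qj. intros H. apply Nat2Z.inj in H. apply Nat.pow_inj_r in H; auto. Qed.

Lemma V_exact r k j0 : (qj j0 = k \/ qj j0 = - k)%Z -> Vk r k = bb r j0.
Proof.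
  intros H. unfold Vk.
  pose proof (qj_pos j0).
  assert (Hj : (j0 <= Z.to_nat (Z.abs k))%nat).
  { pose proof (lt_pow2 j0). unfold qj in *. lia. }
  rewrite (sum_single _ j0); auto.
  - unfold Ind. destruct (Z.eq_dec (qj j0) k), (Z.eq_dec (qj j0) (-k)); try lia; ring.
  - intros i Hi. unfold Ind. pose proof (qj_pos i).
    destruct (Z.eq_dec (qj i) k), (Z.eq_dec (qj i) (-k)); try ring;
    exfalso; apply Hi, qj_inj; lia.
Qed.

Lemma V_cases r k : Vk r k = 0 \/ exists j0, (qj j0 = k \/ qj j0 = - k)%Z /\ Vk r k = bb r j0.
Proof.
  destruct (Classical_Prop.classic (exists j0, (qj j0 = k \/ qj j0 = - k)%Z)) as [[j0 H]|H].
  - right. exists j0. split; auto. now apply V_exact.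
  - left. unfold Vk. apply sum_all_zero. intros i. unfold Ind.
    destruct (Z.eq_dec (qj i) k), (Z.eq_dec (qj i) (-k)); try ring;
    exfalso; apply H; exists i; auto.
Qed.

Lemma reindex (h : Z -> R) N :
  sum_f_R0 (fun l => h (Z.of_nat l - Z.of_nat (S N))%Z) (2 * S N) =
  h (- Z.of_nat (S N))%Z + sum_f_R0 (fun l => h (Z.of_nat l - Z.of_nat N)%Z) (2 * N)
  + h (Z.of_nat (S N)).
Proof.
  replace (2 * S N)%nat with (S (S (2 * N))) by lia.
  rewrite decomp_sum by lia. simpl Init.Nat.pred.
  rewrite tech5. rewrite Rplus_assoc. f_equal.
  replace (N + (N + 0))%nat with (2 * N)%nat by lia. f_equal.
  apply sum_eq. intros i _. f_equal. lia. f_equal. lia.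
Qed.

Lemma tele_bound (h : Z -> R) B : 0 <= B -> h 0%Z <= 0 ->
  (forall n : nat, h (Z.of_nat (S n)) <= B * (1 / INR (S n) - 1 / (INR (S n) + 1)) /\
                   h (- Z.of_nat (S n))%Z <= B * (1 / INR (S n) - 1 / (INR (S n) + 1))) ->
  forall N, sum_f_R0 (fun l => h (Z.of_nat l - Z.of_nat N)%Z) (2 * N) <= 2 * B * (1 - 1 / (INR N + 1)).
Proof.
  intros HB H0 Hh N. induction N.
  - simpl. replace (1 - 1 / (0 + 1)) with 0 by field. lra.
  - rewrite reindex. destruct (Hh N) as [H1 H2].
    assert (E : 2 * B * (1 - 1 / (INR (S N) + 1)) =
      2 * B * (1 - 1 / (INR N + 1)) + 2 * (B * (1 / INR (S N) - 1 / (INR (S N) + 1)))).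
    { rewrite S_INR. pose proof (pos_INR N). field. lra. }
    rewrite E. lra.
Qed.

Lemma pow2_exp j : 2 ^ j = exp (INR j * ln 2).
Proof. rewrite <- exp_pow_nat, exp_ln by lra. reflexivity. Qed.

Lemma bb_sq r j : bb r j ^ 2 = exp (- (r * INR j ^ 2)).
Proof. unfold bb. rewrite exp_pow_nat. f_equal. simpl. field. Qed.

Lemma expo_ineq (a J l s s2 : R) : 0 < l -> 0 < s -> s < s2 ->
  2 * (a + 1) * J * l - l ^ 2 / s * J ^ 2 <= (s + s ^ 2 / (s2 - s)) + s2 * a ^ 2.
Proof.
  intros Hl Hs Hs2.
  assert (A1 : 2 * (a + 1) * J * l - l ^ 2 / s * J ^ 2 <= s * (a + 1) ^ 2).
  { assert (0 <= (s * (a + 1) - l * J) ^ 2 / s) by (apply Rdiv_le_0_compat; [apply pow2_ge_0 | lra]).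
    replace ((s * (a + 1) - l * J) ^ 2 / s) with
      (s * (a + 1) ^ 2 - (2 * (a + 1) * J * l - l ^ 2 / s * J ^ 2)) in H by (field; lra).
    lra. }
  assert (A2 : s * (a + 1) ^ 2 <= (s + s ^ 2 / (s2 - s)) + s2 * a ^ 2).
  { assert (0 <= ((s2 - s) * a - s) ^ 2 / (s2 - s)) by (apply Rdiv_le_0_compat; [apply pow2_ge_0 | lra]).
    replace (((s2 - s) * a - s) ^ 2 / (s2 - s)) with
      ((s + s ^ 2 / (s2 - s)) + s2 * a ^ 2 - s * (a + 1) ^ 2) in H by (field; lra).
    lra. }
  lra.
Qed.

Lemma exp_mono a b : a <= b -> exp a <= exp b.
Proof. intros [H|H]. now apply Rlt_le, exp_increasing. subst; lra. Qed.

Definition Kc (s s2 : R) : R := s + s ^ 2 / (s2 - s).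

Lemma x_bound (x a : R) : 1 <= x -> 0 <= a -> a * (x * (x + 1)) <= 2 * (a * x ^ 2).
Proof. intros. assert (0 <= a * (x - 1)) by (apply Rmult_le_pos; lra). nra. Qed.

Lemma core_ineq s s2 (al j : nat) : 0 < s -> s < s2 ->
  (2 ^ j) ^ (2 * al) * bb (ln 2 ^ 2 / s) j ^ 2 * ((2 ^ j) * (2 ^ j + 1))
  <= 2 * exp (Kc s s2 + s2 * INR al ^ 2).
Proof.
  intros Hs Hs2.
  assert (Hl : 0 < ln 2) by (rewrite <- ln_1; apply ln_increasing; lra).
  assert (Hx : 1 <= 2 ^ j) by (apply pow_R1_Rle; lra).
  eapply Rle_trans. apply x_bound. auto.
  apply Rmult_le_pos; [apply pow_le; lra | apply pow2_ge_0].
  apply Rmult_le_compat_l. lra.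
  rewrite <- pow_mult, bb_sq, !pow2_exp, <- exp_pow_nat, <- exp_pow_nat.
  rewrite <- pow_mult, !exp_pow_nat, <- !exp_plus.
  apply exp_mono. rewrite mult_INR. simpl INR.
  pose proof (expo_ineq (INR al) (INR j) (ln 2) s s2 Hl Hs Hs2). unfold Kc.
  rewrite mult_INR, !plus_INR in *. simpl INR in *. lra.
Qed.

Definition rr (s : R) : R := ln 2 ^ 2 / s.
Definition cc (L nu s s2 : R) : R := L ^ 2 * exp (Kc s s2) / nu ^ 2.

Lemma rr_pos s : 0 < s -> 0 < rr s.
Proof. intros. unfold rr. assert (0 < ln 2) by (rewrite <- ln_1; apply ln_increasing; lra).
  apply Rdiv_lt_0_compat; auto. apply pow_lt; auto. Qed.

Lemma term_ub L nu s s2 al k : 0 < L -> 0 < nu -> 0 < s -> s < s2 -> k <> 0%Z ->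
  eig L 0 k ^ al * four_sq L (uu L (rr s)) 0 k <=
  cc L nu s s2 * exp (s2 * INR al ^ 2) * (nu ^ 2 * kappa0 L ^ (2 * al)) / 2 *
    (1 / IZR (Z.abs k) - 1 / (IZR (Z.abs k) + 1)).
Proof.
  intros HL Hnu Hs Hs2 Hk.
  rewrite four_sq_uu by (auto; now apply rr_pos).
  assert (Hck : ck L 0 / L = 1) by (unfold ck; simpl; field; lra).
  rewrite Hck, pow1, Rmult_1_r.
  pose proof (kappa0_pos L HL) as Hka.
  assert (Hak : 1 <= IZR (Z.abs k)) by (apply IZR_le; lia).
  assert (Htel : 0 <= 1 / IZR (Z.abs k) - 1 / (IZR (Z.abs k) + 1)).
  { assert (1 / (IZR (Z.abs k) + 1) <= 1 / IZR (Z.abs k)).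
    apply Rmult_le_compat_l. lra. apply Rinv_le_contravar; lra. lra. }
  assert (HB : 0 <= cc L nu s s2 * exp (s2 * INR al ^ 2) * (nu ^ 2 * kappa0 L ^ (2 * al)) / 2).
  { assert (0 < cc L nu s s2).
    { unfold cc. apply Rdiv_lt_0_compat. apply Rmult_lt_0_compat. apply pow_lt; lra.
      apply exp_pos. apply pow_lt; lra. }
    assert (0 < nu ^ 2 * kappa0 L ^ (2 * al)) by (apply Rmult_lt_0_compat; apply pow_lt; lra).
    pose proof (exp_pos (s2 * INR al ^ 2)).
    apply Rlt_le, Rdiv_lt_0_compat; [|lra]. apply Rmult_lt_0_compat; [apply Rmult_lt_0_compat|]; auto. }
  destruct (V_cases (rr s) k) as [V0 | [j0 [Hq V]]].
  - rewrite V0. replace (L / 2 * 0) with 0 by ring. rewrite pow_i by lia.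
    rewrite Rmult_0_r. now apply Rmult_le_pos.
  - rewrite V.
    assert (Hx : IZR (Z.abs k) = 2 ^ j0).
    { assert (Z.abs k = qj j0) by (pose proof (qj_pos j0); lia).
      rewrite H. unfold qj. rewrite <- INR_IZR_INZ, pow_INR. reflexivity. }
    assert (He : eig L 0 k = kappa0 L ^ 2 * (2 ^ j0) ^ 2).
    { unfold eig. rewrite <- Hx, abs_IZR, <- (pow2_abs (IZR k)). simpl. ring. }
    rewrite He, Hx. unfold rr.
    pose proof (core_ineq s s2 al j0 Hs Hs2) as C.
    set (x := 2 ^ j0) in *. set (b := bb (ln 2 ^ 2 / s) j0) in *.
    assert (Hx1 : 1 <= x) by (apply pow_R1_Rle; lra).
    rewrite Rpow_mult_distr, <- !pow_mult.
    unfold cc.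
    replace (1 / x - 1 / (x + 1)) with (1 / (x * (x + 1))) by (field; lra).
    set (E := exp (Kc s s2 + s2 * INR al ^ 2)) in *.
    assert (HEq : exp (Kc s s2) * exp (s2 * INR al ^ 2) = E) by (unfold E; now rewrite exp_plus).
    assert (Hkp : 0 < kappa0 L ^ (2 * al)) by (apply pow_lt; lra).
    assert (Hxx : 0 < x * (x + 1)) by nra.
    set (P := kappa0 L ^ (2 * al)) in *. set (Q := x ^ (2 * al)) in *.
    clearbody P Q E b x.
    replace (L ^ 2 * exp (Kc s s2) / nu ^ 2 * exp (s2 * INR al ^ 2) * (nu ^ 2 * P) / 2 *
      (1 / (x * (x + 1)))) with (P * (L ^ 2 / 4) * (2 * E / (x * (x + 1)))).
    2:{ rewrite <- HEq. field. split; lra. }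
    replace (P * Q * (L / 2 * b) ^ 2) with
      (P * (L ^ 2 / 4) * (Q * b ^ 2)) by field.
    apply Rmult_le_compat_l. apply Rmult_le_pos; [lra | nra].
    apply (Rmult_le_reg_r (x * (x + 1))); auto.
    replace (2 * E / (x * (x + 1)) * (x * (x + 1))) with (2 * E) by (field; lra).
    exact C.
Qed.

Lemma four_sq_k1 L r k1 k2 : 0 < L -> 0 < r -> k1 <> 0%Z -> four_sq L (uu L r) k1 k2 = 0.
Proof.
  intros. rewrite four_sq_uu by auto. unfold ck.
  destruct (Z.eq_dec k1 0); [lia|]. unfold Rdiv. rewrite Rmult_0_l. simpl. ring.
Qed.

Lemma partial_ub L nu s s2 al N : 0 < L -> 0 < nu -> 0 < s -> s < s2 ->
  normA_partial L (uu L (rr s)) al N <=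
  cc L nu s s2 * exp (s2 * INR al ^ 2) * (nu ^ 2 * kappa0 L ^ (2 * al)).
Proof.
  intros HL Hnu Hs Hs2. pose proof (rr_pos s Hs) as Hr. unfold normA_partial.
  rewrite (sum_single _ N) by (lia || (intros i Hi; apply sum_all_zero; intros l;
     cbv zeta; rewrite four_sq_k1 by (auto; lia); ring)).
  cbv zeta.
  rewrite (sum_eq _ (fun l => (fun k => eig L 0 k ^ al * four_sq L (uu L (rr s)) 0 k)
                                 (Z.of_nat l - Z.of_nat N)%Z)).
  2:{ intros l _. now rewrite Z.sub_diag. }
  set (B := cc L nu s s2 * exp (s2 * INR al ^ 2) * (nu ^ 2 * kappa0 L ^ (2 * al)) / 2).
  assert (HB : 0 <= B).
  { assert (0 < cc L nu s s2).
    { unfold cc. apply Rdiv_lt_0_compat. apply Rmult_lt_0_compat. apply pow_lt; lra.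
      apply exp_pos. apply pow_lt; lra. }
    pose proof (kappa0_pos L HL).
    assert (0 < nu ^ 2 * kappa0 L ^ (2 * al)) by (apply Rmult_lt_0_compat; apply pow_lt; lra).
    pose proof (exp_pos (s2 * INR al ^ 2)).
    apply Rlt_le, Rdiv_lt_0_compat; [|lra]. apply Rmult_lt_0_compat; [apply Rmult_lt_0_compat|]; auto. }
  eapply Rle_trans. apply (tele_bound (fun k => eig L 0 k ^ al * four_sq L (uu L (rr s)) 0 k) B HB).
  - rewrite four_sq_uu, Vk0 by auto. simpl. lra.
  - intros n. split.
    + eapply Rle_trans. apply (term_ub L nu s s2); auto. lia.
      rewrite Z.abs_eq by lia. rewrite <- INR_IZR_INZ. unfold B. lra.
    + eapply Rle_trans. apply (term_ub L nu s s2); auto. lia.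
      rewrite Z.abs_neq by lia. rewrite Z.opp_involutive, <- INR_IZR_INZ. unfold B. lra.
  - assert (0 <= 1 / (INR N + 1)).
    { pose proof (pos_INR N). apply Rlt_le, Rdiv_lt_0_compat; lra. }
    assert (2 * B * (1 - 1 / (INR N + 1)) <= 2 * B) by nra.
    unfold B in *. lra.
Qed.

Lemma term_nonneg L r k1 k2 al : 0 < L -> 0 < r ->
  0 <= eig L k1 k2 ^ al * four_sq L (uu L r) k1 k2.
Proof.
  intros. apply Rmult_le_pos. apply pow_le. unfold eig.
  apply Rmult_le_pos. apply pow2_ge_0. pose proof (pow2_ge_0 (IZR k1)). pose proof (pow2_ge_0 (IZR k2)). lra.
  rewrite four_sq_uu by auto. apply Rmult_le_pos; apply pow2_ge_0.
Qed.

Lemma partial_lb L r al j N : 0 < L -> 0 < r -> (2 ^ j <= N)%nat ->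
  eig L 0 (qj j) ^ al * four_sq L (uu L r) 0 (qj j) <= normA_partial L (uu L r) al N.
Proof.
  intros HL Hr HN. unfold normA_partial.
  eapply Rle_trans. 2: apply (sum_ge_single _ N); [lia |].
  2:{ intros i. apply cond_pos_sum. intros l. cbv zeta. now apply term_nonneg. }
  cbv beta. rewrite Z.sub_diag.
  eapply Rle_trans. 2: apply (sum_ge_single _ (N + 2 ^ j)); [lia |].
  2:{ intros l. now apply term_nonneg. }
  cbv beta. replace (Z.of_nat (N + 2 ^ j) - Z.of_nat N)%Z with (qj j) by (unfold qj; lia). lra.
Qed.

Lemma term_lb L s al : 0 < L -> 0 < s ->
  let j := Z.to_nat (Int_part (INR al * (s / ln 2))) in
  kappa0 L ^ (2 * al) * (L ^ 2 / 4) * exp (s * INR al ^ 2 - rr s) <=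
  eig L 0 (qj j) ^ al * four_sq L (uu L (rr s)) 0 (qj j).
Proof.
  intros HL Hs j.
  assert (Hl : 0 < ln 2) by (rewrite <- ln_1; apply ln_increasing; lra).
  pose proof (rr_pos s Hs) as Hr.
  rewrite four_sq_uu by auto. rewrite (V_exact _ _ j) by auto.
  assert (Hck : ck L 0 / L = 1) by (unfold ck; simpl; field; lra).
  rewrite Hck, pow1, Rmult_1_r.
  assert (He : eig L 0 (qj j) = kappa0 L ^ 2 * (2 ^ j) ^ 2).
  { unfold eig, qj. rewrite <- INR_IZR_INZ, pow_INR. replace (INR 2) with 2 by (simpl; ring). replace (IZR 0) with 0 by reflexivity. ring. }
  rewrite He, Rpow_mult_distr, <- !pow_mult.
  assert (HP0 : 0 <= kappa0 L ^ (2 * al)) by (apply pow_le; pose proof (kappa0_pos L HL); lra).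
  set (P := kappa0 L ^ (2 * al)) in *. clearbody P.
  set (Q := 2 ^ (j * (2 * al))).
  replace (P * Q * (L / 2 * bb (rr s) j) ^ 2) with
     (P * (L ^ 2 / 4) * (Q * bb (rr s) j ^ 2)) by field.
  assert (HP : 0 <= P * (L ^ 2 / 4)).
  { apply Rmult_le_pos. auto. nra. }
  apply Rmult_le_compat_l; auto. unfold Q.
  rewrite bb_sq, pow2_exp, <- exp_plus.
  apply exp_mono.
  set (t := s / ln 2).
  assert (Ht : 0 <= INR al * t) by (apply Rmult_le_pos; [apply pos_INR | unfold t; apply Rlt_le, Rdiv_lt_0_compat; lra]).
  destruct (base_Int_part (INR al * t)) as [F1 F2].
  assert (Hnn : (0 <= Int_part (INR al * t))%Z).
  { assert (H1 : IZR (-1) < IZR (Int_part (INR al * t))) by (simpl; lra). apply lt_IZR in H1. lia. }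
  assert (Hj : INR j = IZR (Int_part (INR al * t))).
  { unfold j. rewrite INR_IZR_INZ, Z2Nat.id; auto. }
  rewrite mult_INR. simpl INR. rewrite <- Hj in F1, F2.
  unfold rr.
  set (a := INR al) in *. set (J := INR j) in *. set (l := ln 2) in *.
  assert (Hsq : (a * t - J) ^ 2 <= 1) by nra.
  replace (J * INR (al + (al + 0)) * l + - (l ^ 2 / s * J ^ 2)) with
    (l ^ 2 / s * (a ^ 2 * t ^ 2 - (a * t - J) ^ 2)).
  2:{ unfold a, t. rewrite !plus_INR. simpl INR. field. split; lra. }
  replace (s * a ^ 2) with (l ^ 2 / s * (a ^ 2 * t ^ 2)).
  2:{ unfold t. field. split; lra. }
  assert (0 < l ^ 2 / s) by (apply Rdiv_lt_0_compat; [apply pow_lt|]; lra).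
  nra.
Qed.

Lemma Rbar_le_fin (a b : R) : a <= b -> Rbar_le (Finite a) (Finite b).
Proof. intros H; exact H. Qed.

Lemma Rbar_le_fin' (a b : R) : Rbar_le (Finite a) (Finite b) -> a <= b.
Proof. intros H; exact H. Qed.

Theorem proposition10p3 (L nu sigma1 sigma2 : R) :
  0 < L -> 0 < nu -> 0 < sigma1 -> sigma1 < sigma2 ->
  (forall u : vfield, classC L nu sigma1 u -> classC L nu sigma2 u) /\
  (exists u : vfield, classC L nu sigma2 u /\ ~ classC L nu sigma1 u).
Proof.
  intros HL Hnu Hs1 Hs12.
  pose proof (kappa0_pos L HL) as Hka.
  split.
  - intros u [Hs [c0 Hc]]. split; auto. exists (Rmax c0 0). intros al.
    eapply Rbar_le_trans. apply Hc. apply Rbar_le_fin.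
    set (K := nu ^ 2 * kappa0 L ^ (2 * al)).
    assert (HK : 0 <= K) by (unfold K; apply Rmult_le_pos; apply pow_le; lra).
    assert (He : exp (sigma1 * INR al ^ 2) <= exp (sigma2 * INR al ^ 2)).
    { apply exp_mono. pose proof (pow2_ge_0 (INR al)). nra. }
    pose proof (exp_pos (sigma1 * INR al ^ 2)).
    destruct (Rle_dec 0 c0).
    + rewrite Rmax_left by lra. apply Rmult_le_compat_r; auto. apply Rmult_le_compat_l; auto.
    + rewrite Rmax_right by lra. rewrite !Rmult_0_l.
      apply Rnot_le_lt in n. assert (c0 * exp (sigma1 * INR al ^ 2) <= 0) by nra. nra.
  - set (s := (sigma1 + sigma2) / 2).
    assert (Hs : 0 < s) by (unfold s; lra).
    assert (Hs2 : s < sigma2) by (unfold s; lra).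
    assert (Hs1s : sigma1 < s) by (unfold s; lra).
    exists (uu L (rr s)). split.
    + split. apply uu_smooth_in_H; auto. now apply rr_pos.
      exists (cc L nu s sigma2). intros al. unfold normA2.
      rewrite <- Lim_seq_const. apply Lim_seq_le_loc. exists 0%nat. intros N _.
      now apply partial_ub.
    + intros [_ [c0 Hc]].
      set (D := Rabs c0 * nu ^ 2 + 1).
      assert (HD : 0 < D) by (unfold D; pose proof (Rabs_pos c0); pose proof (pow2_ge_0 nu); nra).
      assert (HL4 : 0 < L ^ 2 / 4) by (pose proof (pow_lt L 2 HL); lra).
      set (X := rr s + ln D - ln (L ^ 2 / 4)).
      destruct (INR_unbounded (Rmax 1 (X / (s - sigma1)))) as [al Hal].
      set (a := INR al) in *.
      assert (Ha1 : 1 < a) by (pose proof (Rmax_l 1 (X / (s - sigma1))); lra).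
      assert (HaX : X < (s - sigma1) * a).
      { pose proof (Rmax_r 1 (X / (s - sigma1))).
        apply (Rmult_lt_compat_l (s - sigma1)) in Hal; [|lra].
        assert ((s - sigma1) * (X / (s - sigma1)) = X) by (field; lra). nra. }
      assert (Hineq : D * exp (sigma1 * a ^ 2) <= L ^ 2 / 4 * exp (s * a ^ 2 - rr s)).
      { rewrite <- (exp_ln D), <- (exp_ln (L ^ 2 / 4)) by auto.
        rewrite <- !exp_plus. apply exp_mono. unfold X in HaX. assert (0 <= (s - sigma1) * (a * (a - 1))) by (apply Rmult_le_pos; [lra | apply Rmult_le_pos; lra]). nra. }
      set (j := Z.to_nat (Int_part (INR al * (s / ln 2)))).
      pose proof (term_lb L s al HL Hs) as TL. cbv zeta in TL. fold j in TL.
      assert (HT : Rbar_le (Finite (eig L 0 (qj j) ^ al * four_sq L (uu L (rr s)) 0 (qj j)))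
                           (normA2 L (uu L (rr s)) al)).
      { unfold normA2. rewrite <- Lim_seq_const. apply Lim_seq_le_loc.
        exists (2 ^ j)%nat. intros N HN. apply partial_lb; auto. now apply rr_pos. }
      pose proof (Rbar_le_fin' _ _ (Rbar_le_trans _ _ _ HT (Hc al))) as F.
      fold a in F, TL.
      set (P := kappa0 L ^ (2 * al)) in *.
      assert (HP : 0 < P) by (unfold P; apply pow_lt; lra).
      assert (Hc0 : c0 * nu ^ 2 < D).
      { unfold D. pose proof (Rle_abs c0). pose proof (pow2_ge_0 nu). nra. }
      pose proof (exp_pos (sigma1 * a ^ 2)) as He.
      assert (c0 * exp (sigma1 * a ^ 2) * (nu ^ 2 * P) < P * (L ^ 2 / 4) * exp (s * a ^ 2 - rr s)).
      { replace (c0 * exp (sigma1 * a ^ 2) * (nu ^ 2 * P)) with (P * ((c0 * nu ^ 2) * exp (sigma1 * a ^ 2))) by ring.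
        replace (P * (L ^ 2 / 4) * exp (s * a ^ 2 - rr s)) with (P * (L ^ 2 / 4 * exp (s * a ^ 2 - rr s))) by ring.
        apply Rmult_lt_compat_l; auto.
        assert (c0 * nu ^ 2 * exp (sigma1 * a ^ 2) < D * exp (sigma1 * a ^ 2)) by (apply Rmult_lt_compat_r; auto).
        lra. }
      lra.
Qed.
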